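(* Let $T=(V_T,E_T)$ be a finite tree, $r\in V_T$, and $Q\subseteq V_T$ non-empty. Root $T$ at $r$, let $V_Q$ be the set of nodes $u$ whose subtree (w.r.t. root $r$) contains a node of $Q$, let $T_Q$ be the subtree of $T$ induced by $V_Q$, let $A_Q=\{u\in V_Q:\deg_{T_Q}(u)\ge 3\}$, and let $Q'=Q\cup A_Q$. Then $T$ has one or two $Q'$-centroids.
   Context: For a tree $T$ and a set $Q\subseteq V_T$, a node $u\in Q$ is a $Q$-centroid if every connected component of $T-u$ contains at most $|Q|/2$ nodes of $Q$. *)

(* Defs.v *)
From mathcomp Require Import all_boot.
From mathcomp Require Import boolp.
Set Implicit Arguments. Unset Strict Implicit. Unset Printing Implicit Defensive.

Section Tree.
Variables (T : finType) (e : rel T).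

Definition simple_path (x y : T) (p : seq T) : bool :=
  [&& path e x p, last x p == y & uniq (x :: p)].

Definition is_tree : Prop :=
  symmetric e /\ irreflexive e /\
  forall x y : T, exists! p : seq T, simple_path x y p.

Definition del_rel (u : T) : rel T := [rel x y | [&& e x y, x != u & y != u]].

(* u is a Q-centroid: u \in Q and every component of T - u (the component
   of each v != u) contains at most |Q|/2 nodes of Q *)
Definition is_centroid (Q : {set T}) (u : T) : bool :=
  (u \in Q) &&
  [forall v, (v != u) ==>
     (#|[set w in Q | connect (del_rel u) v w]|.*2 <= #|Q|)].

Definition centroids (Q : {set T}) : {set T} := [set u | is_centroid Q u].

(* w lies in the subtree of u for the root r: u lies on the (unique)
   r-w path *)
Definition in_subtree (r u w : T) : Prop :=
  exists p, simple_path r w p /\ u \in r :: p.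

Definition VQ (r : T) (Q : {set T}) : {set T} :=
  [set u | `[< exists2 q, q \in Q & in_subtree r u q >]].

Definition degTQ (r : T) (Q : {set T}) (u : T) : nat :=
  #|[set v in VQ r Q | e u v]|.

Definition AQ (r : T) (Q : {set T}) : {set T} :=
  [set u in VQ r Q | 3 <= degTQ r Q u].

Definition Qprime (r : T) (Q : {set T}) : {set T} := Q :|: AQ r Q.

End Tree.

(* Main.v *)
Require Import Defs.
From mathcomp Require Import all_boot.
From mathcomp Require Import boolp.
From mathcomp Require Import zify.
Set Implicit Arguments. Unset Strict Implicit. Unset Printing Implicit Defensive.

Section Proof.
Variables (T : finType) (e : rel T).
Hypothesis esym : symmetric e.
Hypothesis eirr : irreflexive e.
Hypothesis sp_ex : forall x y, exists p, simple_path e x y p.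
Hypothesis sp_un : forall x y p q, simple_path e x y p -> simple_path e x y q -> p = q.

Local Notation cn y := (connect (del_rel e y)).

Lemma del_sym y : symmetric (del_rel e y).
Proof. move=> a b; rewrite /del_rel /= esym; by case: (a != y); case: (b != y); rewrite ?andbF. Qed.

Lemma cn_sym y a b : cn y a b = cn y b a.
Proof. exact: (sym_connect_sym (@del_sym y)). Qed.

Lemma path_del y x p : path e x p -> y \notin x :: p -> path (del_rel e y) x p.
Proof.
elim: p x => [//|z p IH] x /= /andP[exz pz] H.
have [xy zp] : x != y /\ y \notin z :: p.
  by move: H; rewrite inE negb_or eq_sym => /andP[].
have zy : z != y by move: zp; rewrite inE negb_or eq_sym => /andP[].
by rewrite /= {1}/del_rel /= exz xy zy /=; apply: IH.
Qed.

Lemma cn_of_path y x p : path e x p -> y \notin x :: p -> cn y x (last x p).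
Proof. by move=> pp yp; apply/connectP; exists p => //; apply: path_del. Qed.

Lemma cn_to y x : cn y x y -> x = y.
Proof.
case/connectP=> p; elim/last_ind: p => [//|p z _].
rewrite rcons_path last_rcons => /andP[_ /and3P[_ _ zy]] yz.
by rewrite -yz eqxx in zy.
Qed.

Lemma del_path y x p : path (del_rel e y) x p -> x != y ->
  path e x p /\ y \notin x :: p.
Proof.
elim: p x => [|z p IH] x /=; first by rewrite inE eq_sym => _ ->.
case/andP=> /and3P[exz _ zy] pz xy.
have [pz' yn] := IH _ pz zy.
by rewrite exz pz'; split=> //; rewrite inE negb_or eq_sym xy.
Qed.

Lemma cn_avoid y u v : cn y u v -> u != y ->
  exists p, simple_path e u v p /\ y \notin u :: p.
Proof.
case/connectP=> p pp -> uy.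
case: (shortenP pp) => p' pp' uq sub.
have [pe yn] := del_path pp' uy.
by exists p'; split => //; rewrite /simple_path pe eqxx uq.
Qed.

Lemma split_mem (x s : T) p : s \in x :: p ->
  exists p1 p2, p = p1 ++ p2 /\ last x p1 = s.
Proof.
rewrite inE => /orP[/eqP->|sp]; first by exists [::], p.
case/splitPr: sp => p1 p2; exists (rcons p1 s), p2.
by rewrite cat_rcons last_rcons.
Qed.

Lemma cn_sub y u p s : path e u p -> y \notin u :: p -> s \in u :: p -> cn y u s.
Proof.
move=> pp yn /split_mem [p1 [p2 [defp <-]]].
apply: cn_of_path.
  by move: pp; rewrite defp cat_path => /andP[].
by apply: contra yn; rewrite defp -cat_cons mem_cat => ->.
Qed.

Lemma pre_last u z p s : simple_path e u z p -> s \in u :: p -> s != z -> cn z u s.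
Proof.
case/and3P=> pp /eqP lz uq /split_mem [p1 [p2 [defp ls]]] sz.
rewrite -ls; apply: cn_of_path; first by move: pp; rewrite defp cat_path => /andP[].
have zp2 : z \in p2.
  move: lz; rewrite defp last_cat ls; case: p2 {defp} => [|a q] /=.
    by move=> ez; rewrite ez eqxx in sz.
  by move=> <-; rewrite mem_last.
move: uq; rewrite defp -cat_cons cat_uniq => /and3P[_ /hasPn H _].
exact: H.
Qed.

Lemma nbr c v : v != c -> exists a, e c a /\ cn c a v.
Proof.
move=> vc; have [p sp] := sp_ex c v.
case/and3P: sp => pp /eqP lv uq.
case: p pp lv uq => [|a q] /=; first by move=> _ lv; rewrite lv eqxx in vc.
move=> /andP[eca pq] lv /andP[cnq uq]; exists a; split => //.
by rewrite -lv; apply: cn_of_path.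
Qed.

Lemma adj_disj c a t : e c a -> cn a c t -> cn c a t -> False.
Proof.
move=> eca h1 h2.
have ta : t != a.
  by apply/eqP=> ta; subst t; move/cn_to: h1 => ca; rewrite ca eirr in eca.
have tc : t != c.
  by apply/eqP=> tc; subst t; move/cn_to: h2 => ac; rewrite ac eirr in eca.
rewrite cn_sym in h1; rewrite cn_sym in h2.
have [q1 [sp1 an1]] := cn_avoid h1 ta.
have [q2 [sp2 cn2]] := cn_avoid h2 tc.
case/and3P: sp1 => pp1 /eqP l1 uq1.
have sp3 : simple_path e t a (rcons q1 a).
  by rewrite /simple_path rcons_path pp1 l1 eca last_rcons eqxx -rcons_cons rcons_uniq an1 uq1.
have eq := sp_un sp3 sp2.
move: cn2; rewrite -eq -rcons_cons mem_rcons inE negb_or => /andP[_ H].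
by rewrite -l1 mem_last in H.
Qed.

Lemma sepK a b c : a != b -> b != c -> c != a -> ~~ cn b a c -> ~~ cn a b c -> False.
Proof.
move=> ab bc ca h1 h2.
have [p sp] := sp_ex c a.
have [bp|bp] := boolP (b \in c :: p).
  by move/negP: h2; apply; rewrite cn_sym; apply: pre_last sp bp _; rewrite eq_sym.
case/and3P: sp => pp /eqP l _.
have := cn_of_path pp bp; rewrite l cn_sym => H.
by rewrite H in h1.
Qed.

Definition wt (S : {set T}) y v := #|[set w in S | cn y v w]|.

Lemma wcentroid (S : {set T}) (c0 : T) :
  exists c, forall v, v != c -> (wt S c v).*2 <= #|S|.
Proof.
pose heavy (p : T * T) := (p.2 != p.1) && (#|S| < (wt S p.1 p.2).*2).
case: (pickP (fun c => [forall v, (v != c) ==> ((wt S c v).*2 <= #|S|)])) => [c /forallP H|H].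
  by exists c => v vc; have := H v; rewrite vc.
exfalso.
have hv c : exists v, heavy (c, v).
  move: (H c) => /negbT /forallPn [v]; rewrite negb_imply -ltnNge => /andP[vc hv].
  by exists v; rewrite /heavy /= vc.
have [v0 h0] := hv c0.
case: (@arg_minnP _ (c0,v0) heavy (fun p => #|[set w | cn p.1 p.2 w]|) h0).
move=> [c v] /andP[/= vc hcv] minp.
have [a [eca cav]] := nbr vc.
have [w /andP [/= wa haw]] := hv a.
have [cwc|ncwc] := boolP (cn a w c).
  have disj : [set t in S | cn a w t] :&: [set t in S | cn c v t] = set0.
    apply/setP => t; rewrite !inE.
    apply/negP => /andP[/andP[_ h1] /andP[_ h2]].
    apply: (adj_disj eca).
      by rewrite cn_sym in cwc; apply: connect_trans cwc h1.
    by apply: connect_trans cav h2.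
  have := cardsUI [set t in S | cn a w t] [set t in S | cn c v t].
  rewrite disj cards0 addn0.
  have : #|[set t in S | cn a w t] :|: [set t in S | cn c v t]| <= #|S|.
    by apply: subset_leq_card; apply/subsetP => t; rewrite !inE; case/orP=> /andP[].
  rewrite /wt /= in haw hcv.
  rewrite -!mul2n in haw hcv; lia.
have sub : [set t | cn a w t] \proper [set t | cn c v t].
  apply/properP; split.
    apply/subsetP => t; rewrite !inE => awt.
    have ta : t != a.
      by apply/eqP => ta; subst t; move/cn_to: awt => /eqP; rewrite (negbTE wa).
    rewrite cn_sym in cav.
    apply: connect_trans cav _.
    have [q sq] := sp_ex t a.
    have [cq|cq] := boolP (c \in t :: q).
      have ca : c != a by apply/eqP=> ca; rewrite ca eirr in eca.
      have h := pre_last sq cq ca.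
      by case/negP: ncwc; apply: connect_trans awt h.
    by case/and3P: sq => pq /eqP lq _; rewrite cn_sym -lq; apply: cn_of_path pq cq.
  exists a; rewrite !inE; first by rewrite cn_sym.
  by apply/negP => /cn_to /eqP; rewrite (negbTE wa).
have := proper_card sub; rewrite ltnNge => /negP; apply.
by have := minp (a, w); rewrite /heavy /= wa haw; apply.
Qed.

Lemma overlap S u v : is_centroid e S u -> is_centroid e S v -> u != v ->
  forall w, w \in S -> cn u v w -> cn v u w -> False.
Proof.
move=> /andP[uS /forallP Hu] /andP[vS /forallP Hv] uv w wS h1 h2.
have Hu' := Hu v; rewrite eq_sym uv /= in Hu'.
have Hv' := Hv u; rewrite uv /= in Hv'.
set A := [set w in S | cn u v w] in Hu'.
set B := [set w in S | cn v u w] in Hv'.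
have cov : S \subset A :|: B.
  apply/subsetP => x xS; rewrite !inE xS /=.
  have [xu|xu] := eqVneq x u; first by rewrite xu connect0 orbT.
  have [xv|xv] := eqVneq x v; first by rewrite xv connect0.
  apply/negPn/negP; rewrite negb_or => /andP[n1 n2].
  by apply: (@sepK u v x) => //; rewrite eq_sym.
have wAB : w \in A :&: B by rewrite !inE wS h1 h2.
have := cardsUI A B.
have := subset_leq_card cov.
have : 0 < #|A :&: B| by apply/card_gt0P; exists w.
rewrite -!mul2n in Hu' Hv'; lia.
Qed.

Lemma three S u v z : is_centroid e S u -> is_centroid e S v -> is_centroid e S z ->
  u != v -> v != z -> z != u -> cn u v z -> False.
Proof.
move=> cu cv cz uv vz zu h.
have zS : z \in S by case/andP: cz.
have vS : v \in S by case/andP: cv.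
have n1 : ~~ cn v u z by apply/negP => h'; apply: (overlap cu cv uv zS h h').
apply: (overlap cu cz _ vS); first by rewrite eq_sym.
  by rewrite cn_sym.
apply/negPn/negP => n2.
by apply: (@sepK v z u) => //; rewrite cn_sym.
Qed.

Lemma at_most2 S : #|centroids e S| <= 2.
Proof.
rewrite leqNgt; apply/negP => /card_gt2P [x [y [z [[xC yC zC] [xy yz zx]]]]].
rewrite !inE in xC yC zC.
have [h|h] := boolP (cn x y z); first exact: (three xC yC zC xy yz zx h).
have [h'|h'] := boolP (cn y x z).
  by apply: (three yC xC zC) => //; rewrite eq_sym.
by apply: (@sepK x y z).
Qed.

Definition PS (S : {set T}) := forall y, y \notin S -> forall s1 s2 s3,
  s1 \in S -> s2 \in S -> s3 \in S ->
  ~~ cn y s1 s2 -> ~~ cn y s1 s3 -> ~~ cn y s2 s3 -> False.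

Lemma stepY c y y' t : e y y' -> y != c -> ~~ cn y c t -> cn y y' t -> ~~ cn y' c t.
Proof.
move=> eyy yc nyt yyt; apply/negP => h.
have [ty|ty] := eqVneq t y'.
  subst t; move/cn_to: h => cy; subst c.
  by rewrite yyt in nyt.
rewrite cn_sym in h.
have [q [sq yq]] := cn_avoid h ty.
case/and3P: sq => pq /eqP lq _.
have [yin|yin] := boolP (y \in t :: q).
  have h2 := cn_sub pq yq yin.
  by apply: (adj_disj eyy _ yyt); rewrite cn_sym.
have := cn_of_path pq yin; rewrite lq cn_sym => h3.
by rewrite h3 in nyt.
Qed.

Lemma exists_centroid S : S != set0 -> PS S -> exists u, is_centroid e S u.
Proof.
move=> /set0Pn [x0 x0S] HP.
have [c Hc] := wcentroid S x0.
have [cS|cS] := boolP (c \in S).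
  by exists c; rewrite /is_centroid cS; apply/forallP => v; apply/implyP; exact: Hc.
case: (@arg_minnP _ x0 (mem S) (fun x => #|[set t | cn x c t]|) x0S) => x xS0 minx.
have xS : x \in S by [].
have xc : x != c by apply/eqP => xc; rewrite -xc xS in cS.
have [b [bS nxb]] : exists b, b \in S /\ ~~ cn c x b.
  case: (pickP (fun b => (b \in S) && ~~ cn c x b)) => [b /andP[]|H]; first by eauto.
  have eqS : [set w in S | cn c x w] = S.
    apply/setP => t; rewrite inE; case tS: (t \in S) => //=.
    by move: (H t); rewrite tS /= => /negbFE.
  have := Hc x xc; rewrite /wt eqS.
  have : 0 < #|S| by apply/card_gt0P; exists x0.
  rewrite -mul2n; lia.
have bc : b != c by apply/eqP => bc; rewrite -bc bS in cS.
have cov : forall s, s \in S -> cn c x s || cn c b s.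
  move=> s sS; apply/negPn/negP; rewrite negb_or => /andP[n1 n2].
  exact: (HP c cS x b s xS bS sS nxb n1 n2).
have wx := Hc x xc; have wb := Hc b bc.
have cnt : #|S| <= wt S c x + wt S c b.
  rewrite /wt; have := cardsUI [set w in S | cn c x w] [set w in S | cn c b w].
  have : S \subset [set w in S | cn c x w] :|: [set w in S | cn c b w].
    by apply/subsetP => t tS; rewrite !inE tS /=; apply: cov.
  move/subset_leq_card; lia.
exists x; rewrite /is_centroid xS; apply/forallP => v; apply/implyP => vx.
have [xvc|xvc] := boolP (cn x v c).
  have claim : forall w, w \in S -> cn x v w -> ~~ cn c x w.
    move=> w wS xvw; apply/negP => cxw.
    have xcw : cn x c w by rewrite cn_sym in xvc; apply: connect_trans xvc xvw.
    have [a [eca cax]] := nbr xc.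
    pose Y := fun y => [&& y != c, ~~ cn y c x & ~~ cn y c w].
    have aY : Y a.
      rewrite /Y; apply/and3P; split.
      - by apply/eqP => ac; rewrite ac eirr in eca.
      - by apply/negP => h; apply: (adj_disj eca h cax).
      - apply/negP => h; apply: (adj_disj eca h).
        exact: connect_trans cax cxw.
    case: (@arg_maxnP _ a Y (fun y => #|[set t | cn y c t]|) aY) => y /and3P [yc nycx nycw] maxy.
    have yx : x != y by apply/eqP => xy; subst y; rewrite xcw in nycw.
    have nyxw : ~~ cn y x w.
      apply/negP => yxw.
      have [y' [eyy yyx]] := nbr yx.
      have yyw : cn y y' w by apply: connect_trans yyx yxw.
      have ncyy : ~~ cn y c y'.
        by apply/negP => h; rewrite (connect_trans h yyx) in nycx.
      have y'c : y' != c by apply/eqP => y'c; subst y'; rewrite yyx in nycx.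
      have Yy' : Y y'.
        by rewrite /Y y'c (stepY eyy yc nycx yyx) (stepY eyy yc nycw yyw).
      have pr : [set t | cn y c t] \proper [set t | cn y' c t].
        apply/properP; split.
          apply/subsetP => t; rewrite !inE => yct.
          have cy : c != y by rewrite eq_sym.
          have [q [sq yq]] := cn_avoid yct cy.
          case/and3P: sq => pq /eqP lq _.
          have [y'q|y'q] := boolP (y' \in c :: q).
            by rewrite (cn_sub pq yq y'q) in ncyy.
          by rewrite -lq; apply: cn_of_path.
        exists y; rewrite !inE.
          apply/negPn/negP => h.
          apply: (@sepK y y' c) => //.
          - by apply/eqP => yy; rewrite yy eirr in eyy.
          - by rewrite eq_sym.
          - by rewrite cn_sym.
          - by rewrite cn_sym.
        by apply/negP => /cn_to /eqP; rewrite eq_sym (negbTE yc).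
      by have := proper_card pr; rewrite ltnNge; move: (maxy y' Yy') => /= ->.
    have [yS|yS] := boolP (y \in S).
      have pr : [set t | cn y c t] \proper [set t | cn x c t].
        apply/properP; split.
          apply/subsetP => t; rewrite !inE => yct.
          have cy : c != y by rewrite eq_sym.
          have [q [sq yq]] := cn_avoid yct cy.
          case/and3P: sq => pq /eqP lq _.
          have [xq|xq] := boolP (x \in c :: q).
            by rewrite (cn_sub pq yq xq) in nycx.
          by rewrite -lq; apply: cn_of_path.
        exists y; rewrite !inE.
          have cx : c != x by rewrite eq_sym.
          have [q [sq xq]] := cn_avoid xcw cx.
          case/and3P: sq => pq /eqP lq _.
          have [yq|yq] := boolP (y \in c :: q).
            exact: cn_sub pq xq yq.
          by move: (cn_of_path pq yq); rewrite lq (negbTE nycw).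
        by apply/negP => /cn_to /eqP; rewrite eq_sym (negbTE yc).
      by have := proper_card pr; rewrite ltnNge; move: (minx y yS) => /= ->.
    have ycb : cn y b c.
      have by' : b != y by apply/eqP => by'; rewrite -by' bS in yS.
      have [q sq] := sp_ex b c.
      have [yq|yq] := boolP (y \in b :: q).
        have h1 := pre_last sq yq yc.
        have [q' sq'] := sp_ex x c.
        have [yq'|yq'] := boolP (y \in x :: q').
          have h2 := pre_last sq' yq' yc.
          by rewrite cn_sym in h1; rewrite (connect_trans h2 h1) in nxb.
        case/and3P: sq' => pq' /eqP lq' _.
        by move: (cn_of_path pq' yq'); rewrite lq' cn_sym (negbTE nycx).
      case/and3P: sq => pq /eqP lq _.
      by move: (cn_of_path pq yq); rewrite lq.
    apply: (HP y yS b x w bS xS wS) => //.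
      by apply/negP => h; rewrite cn_sym in ycb; rewrite (connect_trans ycb h) in nycx.
    by apply/negP => h; rewrite cn_sym in ycb; rewrite (connect_trans ycb h) in nycw.
  have sub : [set w in S | cn x v w] \subset S :\: [set w in S | cn c x w].
    apply/subsetP => w; rewrite !inE => /andP[wS h]; rewrite wS andbT.
    by rewrite (negbTE (claim w wS h)).
  have := subset_leq_card sub.
  rewrite cardsDS; last by apply/subsetP => t; rewrite inE => /andP[].
  rewrite /wt in wx wb cnt; rewrite -mul2n in wx wb |- *; lia.
have sub : [set w in S | cn x v w] \subset [set w in S | cn c x w].
  apply/subsetP => w; rewrite !inE => /andP[wS h]; rewrite wS /=.
  have wx' : w != x by apply/eqP => wx'; subst w; move/cn_to: h => /eqP; rewrite (negbTE vx).
  have nxwc : ~~ cn x w c by apply/negP => h'; rewrite (connect_trans h h') in xvc.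
  have [q sq] := sp_ex w x.
  have [cq|cq] := boolP (c \in w :: q).
    have cx : c != x by rewrite eq_sym.
    by rewrite (pre_last sq cq cx) in nxwc.
  case/and3P: sq => pq /eqP lq _.
  by move: (cn_of_path pq cq); rewrite lq cn_sym.
have := subset_leq_card sub; rewrite /wt in wx; rewrite -mul2n in wx |- *; lia.
Qed.

Variables (r : T) (Q : {set T}).

Lemma inVQ u q p : q \in Q -> simple_path e r q p -> u \in r :: p -> u \in VQ e r Q.
Proof. by move=> qQ sp up; rewrite inE; apply/asboolP; exists q => //; exists p. Qed.

Lemma VQP u : u \in VQ e r Q -> exists q p, [/\ q \in Q, simple_path e r q p & u \in r :: p].
Proof. by rewrite inE => /asboolP [q qQ [p [sp up]]]; exists q, p. Qed.

Lemma QsubV : Qprime e r Q \subset VQ e r Q.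
Proof.
apply/subsetP => u; rewrite /Qprime inE => /orP[uQ|]; last by rewrite /AQ inE => /andP[].
have [p sp] := sp_ex r u; apply: (inVQ uQ sp).
by case/and3P: sp => _ /eqP <- _; apply: mem_last.
Qed.

Lemma QsubQ' : Q \subset Qprime e r Q.
Proof. by apply/subsetP => u uQ; rewrite /Qprime inE uQ. Qed.

Lemma nbA y s : s \in Qprime e r Q -> s != y -> (y == r) || ~~ cn y r s ->
  y \in VQ e r Q /\ exists n, [/\ e y n, n \in VQ e r Q & cn y n s].
Proof.
move=> sS sy hy.
have [q [p [qQ sp sin]]] := VQP (subsetP QsubV s sS).
have sp' := sp; case/and3P: sp' => pp /eqP lq uq.
have [p1 [p2 [defp ls]]] := split_mem sin.
have pp1 : path e r p1 by move: pp; rewrite defp cat_path => /andP[].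
have yin : y \in r :: p1.
  apply/negPn/negP => yn.
  have := cn_of_path pp1 yn; rewrite ls => h.
  case/orP: hy => [/eqP yr|]; last by rewrite h.
  by rewrite yr mem_head in yn.
have [p11 [p12 [defp1 ly]]] := split_mem yin.
case: p12 defp1 => [|n p12'] defp1.
  by move: ls; rewrite defp1 cats0 ly => ys; rewrite ys eqxx in sy.
have yV : y \in VQ e r Q.
  by apply: (inVQ qQ sp); rewrite defp -cat_cons mem_cat yin.
split => //; exists n; split.
- by move: pp1; rewrite defp1 cat_path ly /= => /and3P[].
- by apply: (inVQ qQ sp); rewrite defp defp1 !inE !mem_cat inE eqxx !orbT.
- have pn : path e n p12' by move: pp1; rewrite defp1 cat_path ly /= => /and3P[].
  have ln : last n p12' = s by move: ls; rewrite defp1 last_cat ly.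
  rewrite -ln; apply: cn_of_path => //.
  apply/negP => yn.
  move: uq; rewrite defp defp1 -catA -cat_cons cat_uniq => /and3P[_ /hasPn H _].
  have := H y; rewrite mem_cat yn => /(_ isT); rewrite -ly.
  have : last r p11 \in r :: p11 by apply: mem_last.
  by move=> ->.
Qed.

Lemma nbB y : y \in VQ e r Q -> y != r ->
  exists n, [/\ e y n, n \in VQ e r Q & cn y n r].
Proof.
move=> /VQP [q [p [qQ sp yin]]] yr.
have sp' := sp; case/and3P: sp' => pp /eqP lq uq.
have [p1 [p2 [defp ly]]] := split_mem yin.
case/lastP: p1 defp ly => [|p1' y0] defp ly.
  by rewrite -ly eqxx in yr.
rewrite last_rcons in ly; subst y0.
have pp1 : path e r (rcons p1' y) by move: pp; rewrite defp cat_path => /andP[].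
exists (last r p1'); split.
- by move: pp1; rewrite rcons_path esym => /andP[].
- by apply: (inVQ qQ sp); rewrite defp -cat_cons mem_cat -rcons_cons mem_rcons inE mem_last orbT.
- rewrite cn_sym; apply: cn_of_path; first by move: pp1; rewrite rcons_path => /andP[].
  move: uq; rewrite defp -cat_cons cat_uniq -rcons_cons rcons_uniq => /andP[/andP[]] //.
Qed.

Lemma PQ : PS (Qprime e r Q).
Proof.
move=> y yS s1 s2 s3 h1 h2 h3 n12 n13 n23.
have sy : forall s, s \in Qprime e r Q -> s != y.
  by move=> s sS; apply/eqP => sy; rewrite -sy sS in yS.
have yV : y \in VQ e r Q.
  have [hy|hy] := boolP ((y == r) || ~~ cn y r s1).
    by case: (nbA h1 (sy _ h1) hy).
  have hy2 : (y == r) || ~~ cn y r s2.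
    apply/orP; right; apply/negP => c2.
    move: hy; rewrite negb_or negbK => /andP[_ c1].
    by rewrite cn_sym in c1; rewrite (connect_trans c1 c2) in n12.
  by case: (nbA h2 (sy _ h2) hy2).
have nb : forall s, s \in Qprime e r Q -> exists n, [/\ e y n, n \in VQ e r Q & cn y n s].
  move=> s sS.
  have [hy|hy] := boolP ((y == r) || ~~ cn y r s).
    by case: (nbA sS (sy _ sS) hy).
  move: hy; rewrite negb_or negbK => /andP[yr c].
  have [n [eyn nV cnr]] := nbB yV yr.
  by exists n; split => //; apply: connect_trans cnr c.
have [m1 [e1 V1 c1]] := nb _ h1.
have [m2 [e2 V2 c2]] := nb _ h2.
have [m3 [e3 V3 c3]] := nb _ h3.
have dst : forall a b sa sb, cn y a sa -> cn y b sb -> ~~ cn y sa sb -> a != b.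
  move=> a b sa sb ca cb nab; apply/eqP => ab; subst b.
  by rewrite cn_sym in ca; rewrite (connect_trans ca cb) in nab.
have : y \in AQ e r Q.
  rewrite /AQ inE yV /=; rewrite /degTQ.
  apply/card_gt2P; exists m1, m2, m3; split; first by split; rewrite in_set ?V1 ?V2 ?V3 ?e1 ?e2 ?e3.
  split; [exact: dst c1 c2 n12 | exact: dst c2 c3 n23 |].
  by rewrite eq_sym; exact: dst c1 c3 n13.
by move=> yA; move: yS; rewrite /Qprime inE yA orbT.
Qed.

End Proof.

Theorem mainTheorem6 (T : finType) (e : rel T) (r : T) (Q : {set T}) :
  is_tree e -> Q != set0 ->
  1 <= #|centroids e (Qprime e r Q)| <= 2.
Proof.
move=> [esym [eirr tu]] Qn0.
have sp_ex : forall x y, exists p, simple_path e x y p.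
  by move=> x y; case: (tu x y) => p [H _]; exists p.
have sp_un : forall x y p q, simple_path e x y p -> simple_path e x y q -> p = q.
  by move=> x y p q H1 H2; case: (tu x y) => p0 [_ U]; rewrite -(U p H1) -(U q H2).
apply/andP; split; last exact: at_most2 esym sp_ex _.
have S0 : Qprime e r Q != set0.
  case/set0Pn: Qn0 => q qQ; apply/set0Pn; exists q; exact: (subsetP (QsubQ' e r Q)).
have [u cu] := exists_centroid esym eirr sp_ex sp_un S0 (@PQ _ _ esym sp_ex r Q).
by apply/card_gt0P; exists u; rewrite inE.
Qed.
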